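(* Let $J\subseteq E$ and let $F\subseteq E\setminus J$ be obtained by picking, for every $b\in B$, a set of $r^J_b$ edges of $E\setminus J$ incident to $b$ of minimal cost at $b$ (i.e. the $r^J_b$ edges $e$ with smallest $c_e^b$). Then $J\cup F$ is an $r$-edge-cover, and: (i) $\ell_F(B)\le\mathsf{opt}$; (ii) $\ell_F(A)\le\theta\cdot\Phi(J)$.
   Context: Bipartite Activation Edge-Multicover: the input is a bipartite multigraph $G=(A\cup B,E)$, where each edge is written $e=ab$ with $a\in A$, $b\in B$ and has non-negative activation costs $c_e^a,c_e^b$, and non-negative integer requirements $r=\{r_b: b\in B\}$. For $J\subseteq E$ and a node $v$, $\delta_J(v)$ is the set of edges of $J$ incident to $v$, $\deg_J(v)=|\delta_J(v)|$, $\ell_J(v)=\max\{c_e^v: e\in\delta_J(v)\}$ (max over the empty set is $0$), and $\ell_J(U)=\sum_{v\in U}\ell_J(v)$. $J$ is an $r$-edge-cover if $\deg_J(b)\ge r_b$ for all $b\in B$. $\mathsf{opt}$ is the minimum of $\ell_J(A\cup B)$ over $r$-edge-covers $J$ (the instance is assumed feasible). The slope is $\theta=\max_{e=ab\in E}\frac{\max\{c_e^a,c_e^b\}}{\min\{c_e^a,c_e^b\}}$. For $b\in B$, $w_b$ is the $r_b$-th smallest of the values $c_e^b$ over edges $e\in E$ incident to $b$ (with multiplicity), $w_b=0$ if $r_b=0$. Residual requirement $r^J_b=\max\{r_b-\deg_J(b),0\}$, potential $\Phi(J)=\sum_{b\in B}w_b r^J_b$. *)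

(* Defs.v *)
(* Bipartite multigraph G = (A u B, E): A, B, E finite types,
   each edge e has endpoints ea e \in A and eb e \in B (parallel edges allowed). *)
From HB Require Import structures.
From mathcomp Require Import all_boot all_order all_algebra.
Set Implicit Arguments. Unset Strict Implicit. Unset Printing Implicit Defensive.
Import Order.TTheory GRing.Theory Num.Theory.
Local Open Scope ring_scope.

Section Activation.
Variables (R : realFieldType) (A B E : finType) (ea : E -> A) (eb : E -> B).
Variables (ca cb : E -> R) (r : B -> nat).

Definition degB (J : {set E}) (b : B) : nat := #|[set e in J | eb e == b]|.

Definition is_cover (J : {set E}) : Prop := forall b, (r b <= degB J b)%N.

Definition ellA_at (J : {set E}) (a : A) : R :=
  \big[Num.max/0]_(e in J | ea e == a) ca e.
Definition ellB_at (J : {set E}) (b : B) : R :=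
  \big[Num.max/0]_(e in J | eb e == b) cb e.
Definition ellA (J : {set E}) : R := \sum_(a : A) ellA_at J a.
Definition ellB (J : {set E}) : R := \sum_(b : B) ellB_at J b.
Definition cost (J : {set E}) : R := ellA J + ellB J.

(* opt = min of l_J(A u B) over r-edge-covers J; the default value cost setT
   is itself attained when the instance is feasible (setT is a cover). *)
Definition opt : R :=
  \big[Num.min/cost setT]_(J : {set E} | [forall b, (r b <= degB J b)%N]) cost J.

(* w_b : r_b-th smallest value c_e^b over edges e incident to b (with
   multiplicity), 0 if r_b = 0 *)
Definition wB (b : B) : R :=
  if r b == 0%N then 0
  else nth 0 (sort <=%R [seq cb e | e <- enum E & eb e == b]) (r b).-1.

(* residual requirement r^J_b = max(r_b - deg_J b, 0) (truncated subtraction) *)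
Definition resid (J : {set E}) (b : B) : nat := (r b - degB J b)%N.

Definition Phi (J : {set E}) : R := \sum_(b : B) wB b * (resid J b)%:R.

Definition slope_bound (theta : R) : Prop :=
  forall e, Num.max (ca e) (cb e) <= theta * Num.min (ca e) (cb e).

End Activation.

(* Main.v *)
Require Import Defs.
From HB Require Import structures.
From mathcomp Require Import all_boot all_order all_algebra.
From mathcomp Require Import zify lra.
Import Order.TTheory GRing.Theory Num.Theory.
Local Open Scope ring_scope.

Lemma cnt (R : realFieldType) (B E : finType) (eb : E -> B) (cb : E -> R) b (p : pred R) :
  count p [seq cb e | e <- enum E & eb e == b] = #|[set e | eb e == b & p (cb e)]|.
Proof.
rewrite count_map count_filter cardE /enum_mem size_filter.
rewrite /enum_mem -enumT /=.
rewrite (@eq_filter _ _ predT) // filter_predT; apply: eq_count => e; by rewrite !inE andbC.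
Qed.

Lemma bigmax_le_gen (R : realFieldType) (I : finType) (P : pred I) (F : I -> R) (x : R) :
  0 <= x -> (forall i, P i -> F i <= x) -> \big[Num.max/0]_(i | P i) F i <= x.
Proof.
move=> x0 H; apply: (big_ind (fun v => v <= x)) => //.
by move=> u v hu hv; rewrite ge_max hu hv.
Qed.

Lemma bigmax_ge0 (R : realFieldType) (I : finType) (P : pred I) (F : I -> R) :
  0 <= \big[Num.max/0]_(i | P i) F i.
Proof.
elim/big_rec: _ => // i x _ hx.
by rewrite le_max hx orbT.
Qed.

Theorem mainTheorem6 (R : realFieldType) (A B E : finType)
  (ea : E -> A) (eb : E -> B) (ca cb : E -> R) (r : B -> nat)
  (ca_ge0 : forall e, 0 <= ca e) (cb_ge0 : forall e, 0 <= cb e)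
  (feasible : is_cover eb r setT)
  (theta : R) (Htheta : slope_bound ca cb theta)
  (J F : {set E})
  (FJ : F \subset ~: J)
  (Fcard : forall b, #|[set e in F | eb e == b]| = resid eb r J b)
  (Fmin : forall e e', e \in F -> e' \notin J -> e' \notin F ->
            eb e = eb e' -> cb e <= cb e') :
  is_cover eb r (J :|: F) /\
  ellB eb cb F <= opt ea eb ca cb r /\
  ellA ea ca F <= theta * Phi eb cb r J.
Proof.
pose s b := [seq cb e | e <- enum E & eb e == b].
pose ss b := sort <=%R (s b).
have ss_sorted b : sorted <=%R (ss b) by apply: sort_sorted; exact: le_total.
have wBE b : r b != 0%N -> wB eb cb r b = nth 0 (ss b) (r b).-1.
  by rewrite /wB => /negPf ->.
have size_ss b : (r b <= size (ss b))%N.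
  rewrite size_sort -(count_predT (s b)) cnt.
  have := feasible b; rewrite /degB.
  move=> h; apply: (leq_trans h); apply: eq_leq; apply: eq_card => e; by rewrite !inE andbT.
have wB_mem b : wB eb cb r b = 0 \/ exists e, wB eb cb r b = cb e.
  rewrite /wB; case: eqP => _; first by left.
  case: (ltnP (r b).-1 (size (ss b))) => h; last by left; rewrite nth_default.
  right; have := mem_nth 0 h; rewrite mem_sort => /mapP [e _ ->]; by exists e.
have wB_ge0 b : 0 <= wB eb cb r b.
  by case: (wB_mem b) => [->|[e ->]].
have cntss b x : count (<= x)%O (ss b) = #|[set e | eb e == b & cb e <= x]|.
  by rewrite count_sort cnt.
have wle b : (0 < r b)%N -> (r b <= #|[set e | eb e == b & (cb e <= wB eb cb r b)%R]|)%N.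
  move=> rb; rewrite leqNgt; apply/negP => hc.
  have rb0 : r b != 0%N by rewrite -lt0n.
  have := @nth_count_gt _ _ (wB eb cb r b) 0 (ss b) (r b).-1 (ss_sorted b).
  rewrite cntss -(wBE _ rb0) ltxx; move=> H; suff: false by []; apply: H.
  have sz := size_ss b; apply/andP; split; first by rewrite -ltnS prednK.
  by rewrite prednK.
have wge b M : (0 < r b)%N -> (r b <= #|[set e | eb e == b & (cb e <= M)%R]|)%N ->
    wB eb cb r b <= M.
  move=> rb hc; have rb0 : r b != 0%N by rewrite -lt0n.
  rewrite (wBE _ rb0); apply: nth_count_le => //.
  by rewrite cntss; move: hc; case: (r b) rb.
have Fle e : e \in F -> cb e <= wB eb cb r (eb e).
  move=> eF; set b := eb e.
  have Fb : e \in [set e in F | eb e == b] by rewrite inE eF eqxx.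
  have respos : (0 < resid eb r J b)%N by rewrite -Fcard; apply/card_gt0P; exists e.
  have rb : (0 < r b)%N by move: respos; rewrite /resid; lia.
  rewrite leNgt; apply/negP => hlt.
  have := wle b rb.
  have sub : [set e | eb e == b & cb e <= wB eb cb r b] \subset
      [set e in J | eb e == b] :|: ([set e in F | eb e == b] :\ e).
    apply/subsetP => e' /[!inE] /andP [/eqP e'b e'w].
    have ne : e' != e by apply/eqP => ee; move: hlt; rewrite -ee ltNge e'w.
    rewrite ne e'b eqxx !andbT /=.
    case: (boolP (e' \in J)) => //= e'J; case: (boolP (e' \in F)) => //= e'F.
    have := Fmin e e' eF e'J e'F (esym e'b).
    by move=> h; move: hlt; rewrite ltNge (le_trans h e'w).
  move/subset_leq_card: sub => sub.
  have := leq_trans (leq_trans sub (leq_card_setU _ _)) (leqnn _).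
  have := cardsD1 e [set e in F | eb e == b]; rewrite Fb Fcard.
  rewrite /resid /degB => h1 h2 h3.
  have := leq_trans h3 h2; move: h1 respos; rewrite /resid /degB; lia.
have ellBFb b : ellB_at eb cb F b <= wB eb cb r b.
  apply: bigmax_le_gen => // e /andP [eF /eqP <-]; exact: Fle.
split.
  move=> b; rewrite /degB.
  have -> : [set e in J :|: F | eb e == b] =
            [set e in J | eb e == b] :|: [set e in F | eb e == b].
    by apply/setP => e; rewrite !inE andb_orl.
  have hI : [set e in J | eb e == b] :&: [set e in F | eb e == b] = set0.
    apply/setP => e; rewrite !inE; case: (boolP (e \in F)) => eF; last by rewrite !andbF.
    by move/subsetP: FJ => /(_ e eF); rewrite inE => /negPf ->.
  have := cardsUI [set e in J | eb e == b] [set e in F | eb e == b].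
  rewrite hI cards0 addn0 Fcard /resid => ->; rewrite /degB; lia.
have key J0 : is_cover eb r J0 -> ellB eb cb F <= cost ea eb ca cb J0.
  move=> hc; apply: (@le_trans _ _ (ellB eb cb J0)).
    apply: ler_sum => b _; apply: (le_trans (ellBFb b)).
    case: (posnP (r b)) => rb.
      by rewrite /wB rb eqxx; apply: bigmax_ge0.
    apply: wge => //; apply: (leq_trans (hc b)); apply: subset_leq_card.
    apply/subsetP => e; rewrite !inE => /andP [eJ eb0]; rewrite eb0 /=.
    by apply: (@le_bigmax_cond _ _ _ 0 e (fun e => (e \in J0) && (eb e == b))); rewrite eJ.
  rewrite /cost lerDr; apply: sumr_ge0 => a _; exact: bigmax_ge0.
split.
  rewrite /opt; apply: (big_ind (fun v => ellB eb cb F <= v)).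
  - exact: key.
  - by move=> u v hu hv; rewrite le_min hu hv.
  - by move=> J0 /forallP hc; apply: key => b; apply: hc.
have cab e : ca e <= theta * cb e.
  have h := Htheta e; have a0 := ca_ge0 e; have b0 := cb_ge0 e.
  case: (lerP (cb e) (ca e)) => hl.
    by move: h; rewrite (max_l hl) (min_r hl).
  move: h; rewrite (max_r (ltW hl)) (min_l (ltW hl)) => h; nra.
case: (lerP 0 theta) => th.
  apply: (@le_trans _ _ (\sum_a \sum_(e in F | ea e == a) ca e)).
    apply: ler_sum => a _; apply: bigmax_le_gen.
      by apply: sumr_ge0 => e _; exact: ca_ge0.
    move=> e he; rewrite (bigD1 e) //= lerDl; apply: sumr_ge0 => e' _; exact: ca_ge0.
  rewrite -(partition_big ea xpredT) //.
  apply: (@le_trans _ _ (\sum_(e in F) theta * wB eb cb r (eb e))).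
    apply: ler_sum => e eF; apply: (le_trans (cab e)); apply: ler_wpM2l => //.
    exact: Fle.
  rewrite -mulr_sumr; apply: ler_wpM2l => //; rewrite /Phi le_eqVlt; apply/orP; left; apply/eqP.
  rewrite (partition_big eb xpredT) //; apply: eq_bigr => b _.
  rewrite (eq_bigr (fun _ => wB eb cb r b)); last by move=> e /andP [_ /eqP ->].
  have -> : \sum_(e in F | eb e == b) wB eb cb r b =
      \sum_(e in [set e in F | eb e == b]) wB eb cb r b.
    by apply: eq_bigl => e; rewrite inE.
  by rewrite sumr_const Fcard mulr_natr.
have c0 e : ca e = 0 /\ cb e = 0.
  have h := Htheta e; have a0 := ca_ge0 e; have b0 := cb_ge0 e.
  have m0 : 0 <= Num.min (ca e) (cb e) by rewrite le_min a0 b0.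
  have M1 : ca e <= Num.max (ca e) (cb e) by rewrite le_max lexx.
  have M2 : cb e <= Num.max (ca e) (cb e) by rewrite le_max lexx orbT.
  split; nra.
have P0 : Phi eb cb r J = 0.
  rewrite /Phi big1 // => b _.
  by case: (wB_mem b) => [->|[e ->]]; rewrite ?(proj2 (c0 e)) mul0r.
rewrite P0 mulr0; apply: sumr_le0 => a _; apply: bigmax_le_gen => // e _.
by rewrite (proj1 (c0 e)).
Qed.
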